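(* Let $S \geq 1$ and, for $i = 1,\dots,S$, let $\boldsymbol{M}_i \in \mathbb{R}^{m_i \times m_i}$ be symmetric positive definite, let $\boldsymbol{K}_i \in \mathbb{R}^{m_i \times m_i}$ be symmetric positive semidefinite, and let $\boldsymbol{C}_i \in \mathbb{R}^{p \times m_i}$ be signed Boolean matrices such that the block matrix $[\boldsymbol{C}_1 \ \cdots \ \boldsymbol{C}_S]$ has full row rank $p$. Let $\Delta t > 0$ and $1/2 < \gamma \leq 1$. Suppose that sequences $\boldsymbol{d}_i^{(n)}, \boldsymbol{v}_i^{(n)} \in \mathbb{R}^{m_i}$ ($i=1,\dots,S$) and $\boldsymbol{\lambda}^{(n)} \in \mathbb{R}^p$, $n = 0,1,2,\dots$, satisfy (the $\boldsymbol{d}$-continuity domain decomposition method with zero external forcing): for all $n \geq 0$ and all $i$: $\boldsymbol{M}_i \boldsymbol{v}_i^{(n)} + \boldsymbol{K}_i \boldsymbol{d}_i^{(n)} = \boldsymbol{C}_i^{\mathrm{T}} \boldsymbol{\lambda}^{(n)}$ and $\sum_{i=1}^S \boldsymbol{C}_i \boldsymbol{d}_i^{(n)} = \boldsymbol{0}$; for all $n \geq 1$ and all $i$: $\boldsymbol{d}_i^{(n)} = \boldsymbol{d}_i^{(n-1)} + \Delta t\left((1-\gamma)\boldsymbol{v}_i^{(n-1)} + \gamma \boldsymbol{v}_i^{(n)}\right)$. Then the sequences $(\boldsymbol{d}_i^{(n)})_{n\ge0}$, $(\boldsymbol{v}_i^{(n)})_{n\ge0}$ ($i=1,\dots,S$)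 and $(\boldsymbol{\lambda}^{(n)})_{n\ge0}$ are all bounded.
   Context: A signed Boolean matrix is a matrix whose entries are in $\{-1,0,+1\}$ and each of whose rows has at most one nonzero entry. A sequence of vectors is bounded if there is a constant $C$ independent of $n$ with $\|\boldsymbol{x}^{(n)}\| < C$ for all $n$ (any norm). The equations model a first-order transient system (e.g. semi-discrete heat conduction) decomposed into $S$ subdomains coupled by Lagrange multipliers $\boldsymbol{\lambda}$, integrated in time with the generalized trapezoidal rule with parameter $\gamma$ and time step $\Delta t$. *)

(* Defs.v *)
From HB Require Import structures.
From mathcomp Require Import all_boot all_order all_algebra.
From mathcomp Require Import reals.
Set Implicit Arguments. Unset Strict Implicit. Unset Printing Implicit Defensive.
Import Order.TTheory GRing.Theory Num.Theory.
Local Open Scope ring_scope.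

Definition symmetric_mx {R : realType} {n : nat} (A : 'M[R]_n) : Prop := A^T = A.

Definition pos_def {R : realType} {n : nat} (A : 'M[R]_n) : Prop :=
  symmetric_mx A /\ forall x : 'cV[R]_n, x != 0 -> 0 < (x^T *m A *m x) 0 0.

Definition pos_semidef {R : realType} {n : nat} (A : 'M[R]_n) : Prop :=
  symmetric_mx A /\ forall x : 'cV[R]_n, 0 <= (x^T *m A *m x) 0 0.

Definition signed_boolean {R : realType} {p m : nat} (C : 'M[R]_(p, m)) : Prop :=
  (forall r j, C r j = 0 \/ C r j = 1 \/ C r j = -1) /\
  (forall r j1 j2, C r j1 != 0 -> C r j2 != 0 -> j1 = j2).

(* bounded sequence of vectors (max-entry norm; all norms equivalent) *)
Definition bounded_seq {R : realType} {n : nat} (x : nat -> 'cV[R]_n) : Prop :=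
  exists c : R, forall k (j : 'I_n), `|x k j 0| < c.

(* Main.v *)
Require Import Defs.
From HB Require Import structures.
From mathcomp Require Import all_boot all_order all_algebra.
From mathcomp Require Import reals.
From mathcomp Require Import ring lra.
Import Order.TTheory GRing.Theory Num.Theory.
Local Open Scope ring_scope.

Section Helpers.
Variable R : realType.

Definition qf {n} (A : 'M[R]_n) (x y : 'cV[R]_n) : R := (x^T *m A *m y) 0 0.

Lemma qfDl n (A : 'M[R]_n) x y z : qf A (x + y) z = qf A x z + qf A y z.
Proof. by rewrite /qf linearD /= !mulmxDl mxE. Qed.
Lemma qfDr n (A : 'M[R]_n) x y z : qf A z (x + y) = qf A z x + qf A z y.
Proof. by rewrite /qf mulmxDr mxE. Qed.
Lemma qfZl n (A : 'M[R]_n) a x y : qf A (a *: x) y = a * qf A x y.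
Proof. by rewrite /qf linearZ /= -!scalemxAl mxE. Qed.
Lemma qfZr n (A : 'M[R]_n) a x y : qf A x (a *: y) = a * qf A x y.
Proof. by rewrite /qf -!scalemxAr mxE. Qed.
Lemma qf_sym n (A : 'M[R]_n) x y : A^T = A -> qf A x y = qf A y x.
Proof.
move=> hA; rewrite /qf.
have -> : (x^T *m A *m y) 0 0 = ((x^T *m A *m y)^T) 0 0 by rewrite [RHS]mxE.
by rewrite !trmx_mul trmxK hA mulmxA.
Qed.

Lemma qf_pd_ge0 n (A : 'M[R]_n) x : pos_def A -> 0 <= qf A x x.
Proof.
move=> [_ hA]; have [->|nz] := eqVneq x 0.
  by rewrite /qf mulmx0 mxE.
exact/ltW/hA.
Qed.

Lemma qf_cs n (A : 'M[R]_n) x y : pos_def A -> qf A x y ^+ 2 <= qf A x x * qf A y y.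
Proof.
move=> hA; have hs := hA.1.
have [->|nz] := eqVneq y 0.
  by rewrite /qf !mulmx0 !mxE mulr0 expr0n.
have py : 0 < qf A y y by apply: hA.2.
set b := qf A x y; set a := qf A x x; set c := qf A y y.
have := @qf_pd_ge0 _ A (x + (- b / c) *: y) hA.
rewrite !qfDl !qfDr !qfZl !qfZr (@qf_sym _ A y x hs) -/a -/b -/c.
move=> h.
have e : a + - b / c * b + (- b / c * b + - b / c * (- b / c * c)) = a - b ^+ 2 / c.
  by field; rewrite gt_eqF.
rewrite e subr_ge0 ler_pdivrMr // in h.
Qed.

Lemma pd_unit n (A : 'M[R]_n) : pos_def A -> A \in unitmx.
Proof.
move=> [hs hA]; rewrite unitmxE unitfE; apply/negP => /det0P [w nz hw].
have := hA (w^T); rewrite trmx_eq0 => /(_ nz).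
by rewrite trmxK hw mul0mx mxE ltxx.
Qed.

Lemma coord_bound n (A : 'M[R]_n) (j : 'I_n) : pos_def A ->
  exists2 c, 0 <= c & forall x : 'cV[R]_n, x j 0 ^+ 2 <= c * qf A x x.
Proof.
move=> hA; have hu := @pd_unit _ A hA.
set y : 'cV[R]_n := invmx A *m delta_mx j 0.
exists (qf A y y); first exact: qf_pd_ge0.
move=> x.
have -> : x j 0 = qf A y x.
  rewrite /qf /y trmx_mul trmx_inv hA.1 trmx_delta.
  by rewrite -(mulmxA _ (invmx A)) mulVmx // mulmx1 -rowE mxE.
exact: qf_cs.
Qed.

Definition bnd (f : nat -> R) := exists c, forall n, `|f n| <= c.

Lemma bndD f g : bnd f -> bnd g -> bnd (fun n => f n + g n).
Proof.
move=> [a ha] [b hb]; exists (a + b) => n.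
by apply: le_trans (ler_normD _ _) _; apply: lerD.
Qed.

Lemma bndM k f : bnd f -> bnd (fun n => k * f n).
Proof.
move=> [a ha]; exists (`|k| * a) => n; rewrite normrM.
by apply: ler_wpM2l.
Qed.

Lemma bnd_big (I : Type) (r : seq I) (g : I -> nat -> R) :
  (forall i, bnd (g i)) -> bnd (fun n => \sum_(i <- r) g i n).
Proof.
move=> hg; elim: r => [|a r [c hc]].
  by exists 0 => n; rewrite big_nil normr0.
have [b hb] := hg a; exists (b + c) => n; rewrite big_cons.
by apply: le_trans (ler_normD _ _) _; apply: lerD.
Qed.

Lemma bnd_ext f g : (forall n, f n = g n) -> bnd f -> bnd g.
Proof. by move=> e [c hc]; exists c => n; rewrite -e. Qed.

Lemma bnd_sq f c : (forall n, f n ^+ 2 <= c) -> bnd f.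
Proof.
move=> h; exists (1 + c) => n.
have [le1|gt1] := leP `|f n| 1.
  apply: le_trans le1 _; rewrite lerDl; apply: le_trans (h n); exact: sqr_ge0.
have hc : f n ^+ 2 <= 1 + c by apply: le_trans (h n) _; rewrite lerDr.
apply: le_trans hc.
rewrite -real_normK ?num_real // expr2; apply: ler_peMr; first exact: normr_ge0.
exact: ltW.
Qed.

Lemma bounded_of n (x : nat -> 'cV[R]_n) :
  (forall j, bnd (fun k => x k j 0)) -> bounded_seq x.
Proof.
move=> h.
have [c hc] : bnd (fun k => \sum_(j <- index_enum 'I_n) `|x k j 0|).
  apply: bnd_big => j; have [c hc] := h j; exists c => k; by rewrite normr_id.
exists (c + 1) => k j; apply: (le_lt_trans _ (_ : c < c + 1)); last by rewrite ltrDl.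
apply: le_trans (hc k); rewrite [X in _ <= X]ger0_norm ?sumr_ge0 //.
by rewrite (bigD1 j) //= lerDl sumr_ge0.
Qed.


Lemma energy_step (S p : nat) (m : 'I_S -> nat) (M K : forall i : 'I_S, 'M[R]_(m i))
  (C : forall i : 'I_S, 'M[R]_(p, m i)) (dt gamma : R)
  (d v : forall i : 'I_S, nat -> 'cV[R]_(m i)) (lam : nat -> 'cV[R]_p) :
  (forall i, pos_def (M i)) -> (forall i, pos_semidef (K i)) ->
  0 < dt -> 1 / 2 <= gamma ->
  (forall n i, M i *m v i n + K i *m d i n = (C i)^T *m lam n) ->
  (forall n, \sum_(i < S) C i *m d i n = 0) ->
  (forall n i, d i n.+1 = d i n + dt *: ((1 - gamma) *: v i n + gamma *: v i n.+1)) ->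
  forall n, \sum_i qf (M i) (d i n.+1) (d i n.+1) <= \sum_i qf (M i) (d i n) (d i n).
Proof.
move=> hM hK hdt hg e1 e2 e3 n.
set mu := (1 - gamma) *: lam n + gamma *: lam n.+1.
pose e i := (1 - gamma) *: d i n + gamma *: d i n.+1.
pose w i := (1 - gamma) *: v i n + gamma *: v i n.+1.
pose ce i := ((C i *m e i)^T *m mu) 0 0.
have sce : \sum_i ce i = 0.
  rewrite /ce -summxE -mulmx_suml -linear_sum /=.
  have -> : \sum_i C i *m e i = 0.
    rewrite /e (eq_bigr (fun i => (1 - gamma) *: (C i *m d i n) + gamma *: (C i *m d i n.+1))).
      by rewrite big_split /= -!scaler_sumr !e2 !scaler0 addr0.
    by move=> i _; rewrite mulmxDr -!scalemxAr.
  by rewrite trmx0 mul0mx mxE.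
have key : forall i, qf (M i) (d i n.+1) (d i n.+1) <= qf (M i) (d i n) (d i n) + 2 * dt * ce i.
  move=> i.
  have hw : M i *m w i + K i *m e i = (C i)^T *m mu.
    rewrite /w /e /mu !mulmxDr -!scalemxAr.
    rewrite (addrACA ((1 - gamma) *: (M i *m v i n))) -!scalerDr e1 e1.
    by rewrite !scalemxAr.
  have qw : qf (M i) (e i) (w i) = ce i - qf (K i) (e i) (e i).
    rewrite /ce /qf trmx_mul -!mulmxA -hw mulmxDr.
    by rewrite [X in _ = X - _]mxE addrK.
  set a := d i n; set h := dt *: w i.
  have hb : d i n.+1 = a + h by rewrite e3.
  have he : e i = a + gamma *: h.
    by rewrite /e hb scalerDr addrA -scalerDl subrK scale1r.
  have hs := (hM i).1.
  have id1 : qf (M i) (d i n.+1) (d i n.+1) =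
      qf (M i) a a + 2 * qf (M i) (e i) h - (2 * gamma - 1) * qf (M i) h h.
    rewrite he hb !qfDl !qfDr (@qf_sym _ (M i) h a hs) (@qfZl _ (M i) gamma); ring.
  rewrite id1 /h qfZr qw.
  have h1 : 0 <= qf (K i) (e i) (e i) by apply: (hK i).2.
  have h2 : 0 <= qf (M i) (dt *: w i) (dt *: w i) by apply: qf_pd_ge0.
  have h3 : 0 <= 2 * gamma - 1 by lra.
  have h4 : 0 <= (2 * gamma - 1) * qf (M i) (dt *: w i) (dt *: w i) by apply: mulr_ge0.
  have h5 : 0 <= dt * qf (K i) (e i) (e i) by apply: mulr_ge0 => //; exact: ltW.
  nra.
apply: le_trans (ler_sum _ (fun i _ => key i)) _.
by rewrite big_split /= -mulr_sumr sce mulr0 addr0.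
Qed.


Lemma energy_bnd (S p : nat) (m : 'I_S -> nat) (M K : forall i : 'I_S, 'M[R]_(m i))
  (C : forall i : 'I_S, 'M[R]_(p, m i)) (dt gamma : R)
  (d v : forall i : 'I_S, nat -> 'cV[R]_(m i)) (lam : nat -> 'cV[R]_p) :
  (forall i, pos_def (M i)) -> (forall i, pos_semidef (K i)) ->
  0 < dt -> 1 / 2 <= gamma ->
  (forall n i, M i *m v i n + K i *m d i n = (C i)^T *m lam n) ->
  (forall n, \sum_(i < S) C i *m d i n = 0) ->
  (forall n i, d i n.+1 = d i n + dt *: ((1 - gamma) *: v i n + gamma *: v i n.+1)) ->
  forall i j, bnd (fun n => d i n j 0).
Proof.
move=> hM hK hdt hg e1 e2 e3 i j.
have st := @energy_step S p m M K C dt gamma d v lam hM hK hdt hg e1 e2 e3.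
have E0 : forall n, \sum_i qf (M i) (d i n) (d i n) <= \sum_i qf (M i) (d i 0) (d i 0).
  by elim=> [//|n IH]; apply: le_trans (st n) IH.
have [c c0 hc] := @coord_bound _ (M i) j (hM i).
apply: (@bnd_sq _ (c * \sum_i qf (M i) (d i 0%N) (d i 0%N))) => n.
apply: le_trans (hc (d i n)) _; apply: ler_wpM2l => //.
apply: le_trans (E0 n).
rewrite (bigD1 i) //= lerDl sumr_ge0 // => k _; exact: qf_pd_ge0.
Qed.

Lemma rec_bnd (x f : nat -> R) (r : R) : `|r| < 1 -> bnd f ->
  (forall n, x n.+1 = f n + r * x n) -> bnd x.
Proof.
move=> hr [c hc] hx.
have c0 : 0 <= c by apply: le_trans (hc 0%N); exact: normr_ge0.
have hr0 : 0 < 1 - `|r| by rewrite subr_gt0.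
exists (`|x 0%N| + c / (1 - `|r|)); elim=> [|n IH].
  by rewrite lerDl divr_ge0 // ltW.
rewrite hx; apply: le_trans (ler_normD _ _) _; rewrite normrM.
have h1 := hc n.
have h2 : `|r| * `|x n| <= `|r| * (`|x 0%N| + c / (1 - `|r|)).
  by apply: ler_wpM2l => //; exact: normr_ge0.
apply: le_trans (lerD h1 h2) _.
have e : c / (1 - `|r|) = c + `|r| * (c / (1 - `|r|)).
  by field; rewrite gt_eqF.
rewrite [X in _ <= _ + X]e mulrDr.
have : `|r| * `|x 0%N| <= `|x 0%N|.
  rewrite -[X in _ <= X]mul1r ler_wpM2r ?normr_ge0 //; exact: ltW.
lra.
Qed.


Lemma lam_bnd (S p : nat) (m : 'I_S -> nat) (C : forall i : 'I_S, 'M[R]_(p, m i))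
  (lam : nat -> 'cV[R]_p) : \rank (mxrow C) = p ->
  (forall i j, bnd (fun n => ((C i)^T *m lam n) j 0)) -> forall r, bnd (fun n => lam n r 0).
Proof.
move=> hr hb r.
have /row_freeP [B hB] : row_free (mxrow C) by rewrite /row_free hr.
have e : forall n, \sum_k ((C (tagnat.sig1 k))^T *m lam n) (tagnat.sig2 k) 0 * B k r = lam n r 0.
  move=> n.
  have -> : lam n r 0 = ((lam n)^T *m (mxrow C *m B)) 0 r by rewrite hB mulmx1 mxE.
  rewrite mulmxA mxE; apply: eq_bigr => k _; congr (_ * _).
  by rewrite !mxE; apply: eq_bigr => s _; rewrite !mxE mulrC.
apply: bnd_ext e _; apply: bnd_big => k.
apply: bnd_ext (fun n => mulrC _ _) _; exact: bndM.
Qed.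

End Helpers.

Theorem mainTheorem2 (R : realType) (S p : nat) (m : 'I_S -> nat)
  (M K : forall i : 'I_S, 'M[R]_(m i)) (C : forall i : 'I_S, 'M[R]_(p, m i))
  (dt gamma : R)
  (d v : forall i : 'I_S, nat -> 'cV[R]_(m i)) (lam : nat -> 'cV[R]_p) :
  (1 <= S)%N ->
  (forall i, pos_def (M i)) ->
  (forall i, pos_semidef (K i)) ->
  (forall i, signed_boolean (C i)) ->
  \rank (mxrow C) = p ->
  0 < dt -> 1 / 2 < gamma -> gamma <= 1 ->
  (forall n i, M i *m v i n + K i *m d i n = (C i)^T *m lam n) ->
  (forall n, \sum_(i < S) C i *m d i n = 0) ->
  (forall n i, d i n.+1 = d i n + dt *: ((1 - gamma) *: v i n + gamma *: v i n.+1)) ->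
  (forall i, bounded_seq (d i)) /\ (forall i, bounded_seq (v i)) /\ bounded_seq lam.
Proof.
move=> hS hM hK hC hr hdt hg1 hg2 e1 e2 e3.
have hg : 1 / 2 <= gamma by exact: ltW.
have bd := @energy_bnd R S p m M K C dt gamma d v lam hM hK hdt hg e1 e2 e3.
pose d' i n := d i n.+1 - d i n.
pose v' i n := v i n.+1 - v i n.
pose lam' n := lam n.+1 - lam n.
have e1' : forall n i, M i *m v' i n + K i *m d' i n = (C i)^T *m lam' n.
  move=> n i; rewrite /v' /d' /lam' !mulmxBr -!e1.
  by rewrite opprD addrACA.
have e2' : forall n, \sum_(i < S) C i *m d' i n = 0.
  move=> n; rewrite /d'; under eq_bigr do rewrite mulmxBr.
  by rewrite sumrB !e2 subr0.
have e3' : forall n i, d' i n.+1 = d' i n + dt *: ((1 - gamma) *: v' i n + gamma *: v' i n.+1).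
  move=> n i; rewrite /d' /v' (e3 n.+1 i) (e3 n i).
  apply/matrixP => a b; rewrite !mxE; ring.
have bd' := @energy_bnd R S p m M K C dt gamma d' v' lam' hM hK hdt hg e1' e2' e3'.
have gp : 0 < gamma by lra.
have g0 : gamma != 0 by rewrite gt_eqF.
have dt0 : dt != 0 by rewrite gt_eqF.
have bv : forall i j, bnd R (fun n => v i n j 0).
  move=> i j.
  apply: (@rec_bnd R _ (fun n => (dt * gamma)^-1 * d' i n j 0) (- ((1 - gamma) / gamma))).
  - rewrite normrN ger0_norm; last by apply: divr_ge0; lra.
    rewrite ltr_pdivrMr; last by lra.
    lra.
  - exact: bndM.
  - move=> n; have := congr1 (fun A : 'cV[R]_(m i) => A j 0) (e3 n i).
    rewrite /d' !mxE => ->; field.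
    by rewrite g0 dt0.
have bC : forall i j, bnd R (fun n => ((C i)^T *m lam n) j 0).
  move=> i j.
  apply: (@bnd_ext R (fun n => \sum_k M i j k * v i n k 0 + \sum_k K i j k * d i n k 0)).
    by move=> n; rewrite -e1 !mxE.
  apply: bndD; apply: bnd_big => k; apply: bndM.
    exact: bv.
  exact: bd.
split; first by move=> i; apply: bounded_of => j; exact: bd.
split; first by move=> i; apply: bounded_of => j; exact: bv.
apply: bounded_of => r; exact: (@lam_bnd R S p m C lam hr bC).
Qed.
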